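(* Let $(z_n)_{n\ge0}$ be a homogeneous Markov chain on $\mathbb{Z}_+^k$ satisfying assumptions (A1) and (A2) below, with associated maps $p_w$ and distribution process $(x_n)$. Let $K\subset S_k$ be compact. If $$\lambda=\inf_{x\in K}\sum_w p_w(x)\,\alpha(w)>0,$$ then almost surely on the event $\{L(\{x_n\}_{n\ge0})\subset K\}\cap\{\lim_{n\to\infty}|z_n|=\infty\}$ we have $\liminf_{n\to\infty}\frac{|z_n|}{n}\ge\lambda$.
   Context: Fix integers $k\ge1$, $m\ge1$. For $w\in\mathbb{Z}^k$, $|w|=\sum_i|w^i|$, $\alpha(w)=\sum_iw^i$; sums over $w$ range over $w\in\mathbb{Z}^k$ with $|w|\le m$. $\mathbb{Z}_+^k=\{z\in\mathbb{Z}^k:z^i\ge0\}$, $S_k=\{x\in\mathbb{R}^k:x^i\ge0,\sum_ix^i=1\}$. $(z_n)$ has transition kernel $\Pi(z,z')=P[z_{n+1}=z'\mid z_n=z]$; $x_n=z_n/|z_n|$ if $z_n\ne0$, else $x_n=0$. (A1) $|z_{n+1}-z_n|\le m$ for all $n$. (A2) There exist Lipschitz maps $p_w:S_k\to[0,1]$ ($|w|\le m$) and $a>0$ with $|p_w(z/|z|)-\Pi(z,z+w)|\le a/|z|$ for all nonzero $z\in\mathbb{Z}_+^k$, $|w|\le m$. $L(\{x_n\})$ is the set of limit points of $(x_n)$. *)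

(* Defs.v *)
From HB Require Import structures.
From mathcomp Require Import all_boot all_order all_algebra.
From mathcomp Require Import all_classical all_reals all_analysis.
Set Implicit Arguments. Unset Strict Implicit. Unset Printing Implicit Defensive.
Import Order.TTheory GRing.Theory Num.Theory.
Import numFieldNormedType.Exports.
Local Open Scope classical_set_scope.
Local Open Scope ring_scope.

Definition zvec (k : nat) := {ffun 'I_k -> int}.

Definition norm1 (k : nat) (w : zvec k) : nat := (\sum_(i < k) `|w i|)%N.

Definition alpha (k : nat) (w : zvec k) : int := \sum_(i < k) w i.

Definition nonneg_vec (k : nat) (z : zvec k) : Prop := forall i, (0 <= z i)%R.

Definition zadd (k : nat) (z w : zvec k) : zvec k := [ffun i => z i + w i].
Definition zsub (k : nat) (z w : zvec k) : zvec k := [ffun i => z i - w i].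

Definition simplex (R : realType) (k : nat) : set 'rV[R]_k :=
  [set x | (forall i, 0 <= x ord0 i) /\ \sum_(i < k) x ord0 i = 1].

(* l1 distance on R^k (all norms on R^k are equivalent). *)
Definition dist1 (R : realType) (k : nat) (x y : 'rV[R]_k) : R :=
  \sum_(i < k) `|x ord0 i - y ord0 i|.

Definition distr_vec (R : realType) (k : nat) (z : zvec k) : 'rV[R]_k :=
  if norm1 z == 0%N then 0 else \row_i ((z i)%:~R / (norm1 z)%:R).

(* Enumeration of {w in Z^k : |w| <= m}: a function f : 'I_k -> 'I_(2m+1)
   encodes w^i = f i - m; we then restrict to |w| <= m. *)
Definition wdecode (k m : nat) (f : {ffun 'I_k -> 'I_(2 * m + 1)}) : zvec k :=
  [ffun i => (nat_of_ord (f i))%:Z - m%:Z].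

Definition sum_w (R : realType) (k m : nat) (F : zvec k -> R) : R :=
  \sum_(f : {ffun 'I_k -> 'I_(2 * m + 1)} | (norm1 (wdecode f) <= m)%N)
     F (wdecode f).

Definition limit_points (R : realType) (k : nat) (u : nat -> 'rV[R]_k)
  : set 'rV[R]_k :=
  [set y | forall e : R, 0 < e -> forall N : nat,
      exists n : nat, (N <= n)%N /\ `|u n - y| < e].

Definition markov_chain (d : measure_display) (Omega : measurableType d)
  (R : realType) (P : probability Omega R) (k : nat)
  (z : nat -> Omega -> zvec k) (Pi : zvec k -> zvec k -> R) : Prop :=
  forall (n : nat) (s : 'I_n.+1 -> zvec k) (s' : zvec k),
    P [set om | (forall i : 'I_n.+1, z i om = s i) /\ z n.+1 om = s']
    = ((Pi (s ord_max) s')%:E * P [set om | forall i : 'I_n.+1, z i om = s i])%E.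

Arguments simplex R k : clear implicits.
Arguments distr_vec R {k} z.

(* Main.v *)
Require Import Defs.
From HB Require Import structures.
From mathcomp Require Import all_boot all_order all_algebra.
From mathcomp Require Import all_classical all_reals all_analysis.
From mathcomp Require Import zify ring lra.
Import Order.TTheory GRing.Theory Num.Theory.
Import numFieldNormedType.Exports.
Local Open Scope classical_set_scope.
Local Open Scope ring_scope.
Set Implicit Arguments. Unset Strict Implicit. Unset Printing Implicit Defensive.

Section Paths.
Variables (k m : nat).
Local Notation W := {ffun 'I_k -> 'I_(2 * m + 1)}.
Definition Wok (f : W) : bool := (norm1 (wdecode f) <= m)%N.
Definition Wl : seq W := [seq f <- enum W | Wok f].

Fixpoint pos (s : zvec k) (p : seq W) : zvec k :=
  match p with [::] => s | f :: p' => pos (zadd s (wdecode f)) p' end.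
Lemma pos_rcons s p f : pos s (rcons p f) = zadd (pos s p) (wdecode f).
Proof. by elim: p s => //= g p IH s; rewrite IH. Qed.

Fixpoint paths (n : nat) : seq (seq W) :=
  if n is n'.+1 then [seq rcons q f | q <- paths n', f <- Wl] else [:: [::]].

Lemma mem_paths n q : size q = n -> all Wok q -> q \in paths n.
Proof.
elim: n q => [|n IH] q.
  by case: q.
case/lastP: q => [//|q f]; rewrite size_rcons all_rcons => -[sq] /andP[wf aq].
apply: allpairs_f; first exact: IH.
by rewrite mem_filter wf mem_enum.
Qed.

Lemma w0_proof : (0 < 2 * m + 1)%N. Proof. by rewrite addn1. Qed.
Definition enc (v : zvec k) : W :=
  [ffun i => insubd (Ordinal w0_proof) (absz (v i + m%:Z)%R)].

Lemma norm1_coord (v : zvec k) i : (absz (v i) <= norm1 v)%N.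
Proof. by rewrite /norm1 (bigD1 i) //= leq_addr. Qed.

Lemma dec_enc v : (norm1 v <= m)%N -> wdecode (enc v) = v.
Proof.
move=> hv; apply/ffunP => i; rewrite !ffunE val_insubd.
have := norm1_coord v i; move: (v i) => x hx.
have hx' : (absz x <= m)%N by apply: leq_trans hv.
have -> : (absz (x + m%:Z)%R < 2 * m + 1)%N by lia.
lia.
Qed.

Lemma Wok_enc v : (norm1 v <= m)%N -> Wok (enc v).
Proof. by move=> hv; rewrite /Wok dec_enc. Qed.

Lemma wdecode_inj : injective (@wdecode k m).
Proof.
move=> f g /ffunP h; apply/ffunP => i; have := h i; rewrite !ffunE => e.
apply: val_inj => /=; lia.
Qed.

End Paths.

Lemma bigsetU_memP (T : Type) (I : eqType) (l : seq I) (F : I -> set T) (x : T) :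
  (\big[setU/set0]_(i <- l) F i) x -> exists2 i, i \in l & F i x.
Proof.
elim: l => [|i l IH]; first by rewrite big_nil.
rewrite big_cons => -[h|h]; first by exists i => //; rewrite mem_head.
by have [j hj hF] := IH h; exists j => //; rewrite in_cons hj orbT.
Qed.

Section Real.
Variable R : realType.

Lemma exp_quad (y : R) : `|y| <= 2^-1 -> expR y <= 1 + y + 2 * y ^+ 2.
Proof.
move=> hy.
have h1 : 1 - y <= expR (- y) by have := expR_ge1Dx (- y); rewrite -[1 - y]/(1 + - y).
rewrite expRN in h1.
have hy' : y <= 2^-1 by have := ler_norm y; lra.
have hy'' : - 2^-1 <= y by have := ler_normr y; rewrite ler_norml in hy; lra.
have hpos : 0 < 1 - y by lra.
have he : 0 < expR y := expR_gt0 y.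
have : expR y * (1 - y) <= 1.
  by rewrite -(ler_pM2r he) in h1; rewrite mulrC; move: h1; rewrite mulVf ?gt_eqF //.
move=> h2.
have h3 : 1 <= (1 - y) * (1 + y + 2 * y ^+ 2).
  have : 0 <= y ^+ 2 * (1 - 2 * y) by apply: mulr_ge0; [exact: sqr_ge0 | lra].
  move=> h; rewrite expr2 in h *; nra.
rewrite expr2 in h3 *; nra.
Qed.

Lemma hoeff (I : eqType) (l : seq I) (q a : I -> R) (M th : R) :
  (forall i, 0 <= q i) -> \sum_(i <- l) q i <= 1 ->
  (forall i, i \in l -> `|a i| <= M) -> 0 <= M -> 0 <= th -> 4 * th * M <= 1 ->
  \sum_(i <- l) q i * expR (- th * (a i - \sum_(j <- l) q j * a j))
    <= 1 + 8 * th ^+ 2 * M ^+ 2.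
Proof.
move=> q0 Q1 aM M0 th0 thM.
set mu := \sum_(j <- l) q j * a j.
set Q := \sum_(j <- l) q j.
have Q0 : 0 <= Q by apply: sumr_ge0.
have hmu : `|mu| <= Q * M.
  apply: le_trans (ler_norm_sum _ _ _) _.
  rewrite /Q mulr_suml big_seq_cond [X in _ <= X]big_seq_cond.
  apply: ler_sum => i /andP[il _]; rewrite normrM ger0_norm //.
  by apply: ler_wpM2l => //; apply: aM.
have hmuM : `|mu| <= M by apply: le_trans hmu _; rewrite -[X in _ <= X]mul1r; apply: ler_wpM2r.
have step : \sum_(i <- l) q i * expR (- th * (a i - mu)) <=
   \sum_(i <- l) (q i + q i * (- th * (a i - mu)) + 2 * (q i * (th ^+ 2 * (4 * M ^+ 2)))).
  rewrite big_seq_cond [X in _ <= X]big_seq_cond.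
  apply: ler_sum => i /andP[il _].
  have hai := aM i il.
  have hy : `|- th * (a i - mu)| <= 2^-1.
    rewrite normrM normrN (ger0_norm th0).
    have : `|a i - mu| <= 2 * M by have := ler_normB (a i) mu; lra.
    move=> h; nra.
  have := exp_quad hy => he.
  have hsq : (- th * (a i - mu)) ^+ 2 <= th ^+ 2 * (4 * M ^+ 2).
    rewrite exprMn sqrrN; apply: ler_wpM2l; first exact: sqr_ge0.
    rewrite -real_normK ?num_real //.
    have : `|a i - mu| <= 2 * M by have := ler_normB (a i) mu; lra.
    move=> h; have h0 : 0 <= `|a i - mu| by [].
    rewrite !expr2; nra.
  have qi0 := q0 i.
  move: he hsq; set y := - th * (a i - mu) => he hsq.
  have h1 := ler_wpM2l qi0 he; have h2 := ler_wpM2l qi0 hsq.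
  move: h1 h2; set B := th ^+ 2 * (4 * M ^+ 2) => h1 h2.
  rewrite !mulrDr mulr1 in h1; lra.
apply: le_trans step _.
rewrite big_split big_split /= -!mulr_sumr -mulr_suml.
have -> : \sum_(i <- l) q i * (- th * (a i - mu)) = - th * (mu - Q * mu).
  rewrite /mu /Q mulr_suml -sumrB mulr_sumr; apply: eq_bigr => i _; ring.
have h1 : - th * (mu - Q * mu) <= th * M * (1 - Q).
  have : - mu <= M by have := ler_norm (- mu); rewrite normrN; lra.
  move=> h; have hQ : 0 <= 1 - Q by rewrite subr_ge0.
  have h' := ler_wpM2l th0 (ler_wpM2r hQ h).
  have -> : - th * (mu - Q * mu) = th * (- mu * (1 - Q)) by ring.
  by rewrite -mulrA.
rewrite -/Q.
have h2 : Q * (th ^+ 2 * (4 * M ^+ 2)) <= th ^+ 2 * (4 * M ^+ 2).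
  by rewrite -[X in _ <= X]mul1r; apply: ler_wpM2r => //; apply: mulr_ge0; [exact: sqr_ge0| apply: mulr_ge0 => //; exact: sqr_ge0].
have h3 : th * M <= 1 by lra.
have : th * M * (1 - Q) <= 1 - Q by rewrite -[X in _ <= X]mul1r; apply: ler_wpM2r; [rewrite subr_ge0 | exact: h3].
move=> h4; rewrite !expr2 in h2 *; lra.
Qed.
End Real.

Section Prob.
Variables (k m : nat) (R : realType) (d : measure_display) (Omega : measurableType d)
  (P : probability Omega R) (z : nat -> Omega -> zvec k) (Pi : zvec k -> zvec k -> R).
Hypothesis hmeas : forall n s, measurable [set om | z n om = s].
Hypothesis hPi0 : forall s s', 0 <= Pi s s'.
Hypothesis hmarkov : markov_chain P z Pi.
Local Notation W := {ffun 'I_k -> 'I_(2 * m + 1)}.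

Definition Ev (s0 : zvec k) (q : seq W) : set Omega :=
  [set om | forall i, (i <= size q)%N -> z i om = pos s0 (take i q)].

Lemma Ev_meas s0 q : measurable (Ev s0 q).
Proof.
have -> : Ev s0 q = \bigcap_i [set om | (i <= size q)%N -> z i om = pos s0 (take i q)].
  by apply/seteqP; split => om /= h i; [move=> hi; apply: h | apply: h].
apply: bigcapT_measurable => i /=.
case: (leqP i (size q)) => hi.
  have -> : [set om | true -> z i om = pos s0 (take i q)] =
            [set om | z i om = pos s0 (take i q)].
    by apply/seteqP; split => om /=; [apply | move=> h _].
  exact: hmeas.
have -> : [set om | false -> z i om = pos s0 (take i q)] = setT.
  by apply/seteqP; split => om.
exact: measurableT.
Qed.

Definition Pr (A : set Omega) : R := fine (P A).

Lemma PrE A : measurable A -> P A = (Pr A)%:E.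
Proof. by move=> mA; rewrite /Pr fineK // fin_num_measure. Qed.

Lemma Pr_ge0 A : 0 <= Pr A.
Proof. by apply: fine_ge0; exact: measure_ge0. Qed.

Lemma Pr_le1 A : measurable A -> Pr A <= 1.
Proof. by move=> mA; rewrite -lee_fin -PrE //; exact: probability_le1. Qed.

Lemma take_rcons_le (q : seq W) f i : (i <= size q)%N -> take i (rcons q f) = take i q.
Proof. by move=> hi; rewrite -cats1 takel_cat. Qed.

Lemma Pr_rcons s0 q f :
  Pr (Ev s0 (rcons q f)) = Pi (pos s0 q) (pos s0 (rcons q f)) * Pr (Ev s0 q).
Proof.
have h := hmarkov (fun i : 'I_(size q).+1 => pos s0 (take i q)) (pos s0 (rcons q f)).
have e1 : Ev s0 (rcons q f) = [set om | (forall i : 'I_(size q).+1, z i om = pos s0 (take i q))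
     /\ z (size q).+1 om = pos s0 (rcons q f)].
  apply/seteqP; split => om /=.
  - move=> H; split.
      move=> i; have hi : (i <= size q)%N by rewrite -ltnS ltn_ord.
      rewrite H ?size_rcons ?take_rcons_le //; exact: leqW.
    by rewrite H ?size_rcons // take_oversize // size_rcons.
  - move=> [H1 H2] i; rewrite size_rcons leq_eqVlt => /orP[/eqP ->|hi].
      by rewrite take_oversize ?size_rcons.
    by rewrite take_rcons_le // (H1 (Ordinal hi)).
have e2 : Ev s0 q = [set om | forall i : 'I_(size q).+1, z i om = pos s0 (take i q)].
  apply/seteqP; split => om /= H.
    by move=> i; apply: H; rewrite -ltnS ltn_ord.
  by move=> i hi; have := H (Ordinal (hi : (i < (size q).+1)%N)).
rewrite /Pr e1 h -e2 /= take_size fineM //.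
exact: fin_num_measure (Ev_meas s0 q).
Qed.

Lemma Ev_rcons_sub s0 q f : Ev s0 (rcons q f) `<=` Ev s0 q.
Proof.
move=> om /= H i hi; rewrite -(take_rcons_le f hi); apply: H.
by rewrite size_rcons; exact: leqW.
Qed.

Lemma zadd_inj (s : zvec k) : injective (zadd s).
Proof.
move=> u v /ffunP h; apply/ffunP => i; have := h i; rewrite !ffunE => e.
by apply: (addrI (s i)).
Qed.

Lemma sum_Pr_rcons s0 q : \sum_(f <- Wl k m) Pr (Ev s0 (rcons q f)) <= Pr (Ev s0 q).
Proof.
have gen : forall l : seq W, uniq l ->
    P (\big[setU/set0]_(f <- l) Ev s0 (rcons q f)) = \sum_(f <- l) P (Ev s0 (rcons q f)).
  elim => [|f l IH] /=; first by rewrite !big_nil measure0.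
  case/andP => fl ul; rewrite !big_cons measureU; first by congr (_ + _); exact: IH.
  - exact: Ev_meas.
  - by apply: bigsetU_measurable => g _; exact: Ev_meas.
  apply/seteqP; split => // om [H1 H2']; have [g gl H2] := bigsetU_memP H2'.
  have e1 := H1 (size q).+1; have e2 := H2 (size q).+1.
  rewrite size_rcons take_oversize ?size_rcons // pos_rcons in e1.
  rewrite size_rcons take_oversize ?size_rcons // pos_rcons in e2.
  have e3 : zadd (pos s0 q) (wdecode g) = zadd (pos s0 q) (wdecode f).
    by rewrite -e1 // e2.
  have efg := wdecode_inj (zadd_inj e3).
  by move: fl; rewrite -efg gl.
have := gen (Wl k m) (filter_uniq _ (enum_uniq _)).
have e : \sum_(f <- Wl k m) P (Ev s0 (rcons q f)) = (\sum_(f <- Wl k m) Pr (Ev s0 (rcons q f)))%:E.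
  by rewrite -sumEFin; apply: eq_bigr => f _; rewrite PrE //; exact: Ev_meas.
rewrite -lee_fin e => <-.
rewrite -PrE; last exact: Ev_meas.
apply: le_measure; rewrite ?inE //; [by apply: bigsetU_measurable => g _; exact: Ev_meas | exact: Ev_meas | ].
by move=> om H; have [g _ H2] := bigsetU_memP H; exact: Ev_rcons_sub H2.
Qed.

Lemma sumPi_le1 s0 q : 0 < Pr (Ev s0 q) ->
  \sum_(f <- Wl k m) Pi (pos s0 q) (zadd (pos s0 q) (wdecode f)) <= 1.
Proof.
move=> hp; have := sum_Pr_rcons s0 q.
under eq_bigr do rewrite Pr_rcons pos_rcons.
by rewrite -mulr_suml -[X in _ <= X]mul1r (ler_pM2r hp).
Qed.

Definition mu (s : zvec k) : R :=
  \sum_(f <- Wl k m) Pi s (zadd s (wdecode f)) * (alpha (wdecode f))%:~R.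
Definition Dst (s : zvec k) (f : W) : R := (alpha (wdecode f))%:~R - mu s.
Fixpoint Sf (s : zvec k) (p : seq W) : R :=
  match p with [::] => 0 | f :: p' => Dst s f + Sf (zadd s (wdecode f)) p' end.

Lemma Sf_rcons s p f : Sf s (rcons p f) = Sf s p + Dst (pos s p) f.
Proof.
elim: p s => [|g p IH] s /=; first by rewrite addr0 add0r.
by rewrite IH addrA.
Qed.

Lemma alpha_le (w : zvec k) : `|(alpha w)%:~R : R| <= (norm1 w)%:R.
Proof.
rewrite -intr_norm (_ : (norm1 w)%:R = ((norm1 w)%:Z)%:~R) // ler_int /alpha /norm1.
apply: le_trans (ler_norm_sum _ _ _) _.
rewrite (big_morph Posz PoszD (erefl _)).
by apply: ler_sum => i _; rewrite abszE.
Qed.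

Lemma alpha_Wl (f : W) : f \in Wl k m -> `|(alpha (wdecode f))%:~R : R| <= m%:R.
Proof.
rewrite mem_filter => /andP[hf _]; apply: le_trans (alpha_le _) _.
by rewrite ler_nat.
Qed.

Definition Mn s0 th n := \sum_(q <- paths k m n) Pr (Ev s0 q) * expR (- th * Sf s0 q).

Lemma Mn_le s0 th n : 0 <= th -> 4 * th * m%:R <= 1 ->
  Mn s0 th n <= (1 + 8 * th ^+ 2 * m%:R ^+ 2) ^+ n.
Proof.
move=> th0 thm; elim: n => [|n IH].
  rewrite /Mn /= big_seq1 /= mulr0 expR0 mulr1 expr0; apply: Pr_le1; exact: Ev_meas.
rewrite /Mn /= big_allpairs_dep /=.
set rho := 1 + 8 * th ^+ 2 * m%:R ^+ 2.
have rho0 : 0 <= rho by rewrite /rho; apply: addr_ge0 => //; apply: mulr_ge0; [apply: mulr_ge0 => //| ]; exact: sqr_ge0.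
apply: le_trans (_ : _ <= \sum_(q <- paths k m n) Pr (Ev s0 q) * expR (- th * Sf s0 q) * rho) _.
  apply: ler_sum => q _.
  set e := pos s0 q.
  have -> : \sum_(f <- Wl k m) Pr (Ev s0 (rcons q f)) * expR (- th * Sf s0 (rcons q f)) =
     Pr (Ev s0 q) * expR (- th * Sf s0 q) *
       \sum_(f <- Wl k m) Pi e (zadd e (wdecode f)) * expR (- th * Dst e f).
    rewrite mulr_sumr; apply: eq_bigr => f _.
    rewrite Pr_rcons Sf_rcons pos_rcons mulrDr expRD -/e; ring.
  have [h0|hne] := eqVneq (Pr (Ev s0 q)) 0; first by rewrite h0 !mul0r.
  have hp : 0 < Pr (Ev s0 q) by rewrite lt_def hne Pr_ge0.
  apply: ler_wpM2l; first by apply: mulr_ge0; [exact: Pr_ge0 | exact: expR_ge0].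
  apply: (@hoeff R _ (Wl k m) (fun f => Pi e (zadd e (wdecode f)))
            (fun f => (alpha (wdecode f))%:~R) m%:R th) => //.
  - exact: sumPi_le1.
  - exact: alpha_Wl.
rewrite -mulr_suml exprS mulrC; apply: ler_wpM2l => //.
Qed.

Definition Aev s0 (c : R) n := \big[setU/set0]_(q <- paths k m n | Sf s0 q <= c) Ev s0 q.

Lemma Aev_meas s0 c n : measurable (Aev s0 c n).
Proof. by apply: bigsetU_measurable => q _; exact: Ev_meas. Qed.

Lemma P_bigsetU_le (I : Type) (l : seq I) (C : pred I) (F : I -> set Omega) :
  (forall i, measurable (F i)) ->
  (P (\big[setU/set0]_(i <- l | C i) F i) <= \sum_(i <- l | C i) P (F i))%E.
Proof.
move=> mF; elim: l => [|i l IH]; first by rewrite !big_nil measure0.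
rewrite !big_cons; case: ifP => _ //.
apply: le_trans (measureU2 _ _ _) _; first exact: mF.
  by apply: bigsetU_measurable => j _; exact: mF.
by apply: leeD.
Qed.

Lemma Pr_Aev s0 c n th : 0 <= th -> 4 * th * m%:R <= 1 ->
  Pr (Aev s0 c n) <= expR (th * c) * (1 + 8 * th ^+ 2 * m%:R ^+ 2) ^+ n.
Proof.
move=> th0 thm.
have h1 : Pr (Aev s0 c n) <= \sum_(q <- paths k m n | Sf s0 q <= c) Pr (Ev s0 q).
  rewrite -lee_fin -PrE; last exact: Aev_meas.
  rewrite -sumEFin /Aev; apply: le_trans; first by apply: P_bigsetU_le; exact: (@Ev_meas s0).
  by apply: lee_sum => q _; rewrite PrE //; exact: Ev_meas.
apply: le_trans h1 _.
apply: le_trans (_ : _ <= expR (th * c) * Mn s0 th n) _; last first.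
  by apply: ler_wpM2l; [exact: expR_ge0 | exact: Mn_le].
rewrite /Mn mulr_sumr big_mkcond /=; apply: ler_sum => q _; case: ifP => hq.
  rewrite mulrCA -expRD -[X in X <= _]mulr1; apply: ler_wpM2l; first exact: Pr_ge0.
  have : 0 <= th * c + - th * Sf s0 q.
    by rewrite mulNr -mulrBr; apply: mulr_ge0 => //; rewrite subr_ge0.
  by move=> h; apply: le_trans (expR_ge1Dx _); rewrite lerDl.
by apply: mulr_ge0; [exact: expR_ge0 | apply: mulr_ge0; [exact: Pr_ge0 | exact: expR_ge0]].
Qed.

Lemma geom_fin (r : R) : 0 <= r < 1 -> (\sum_(0 <= n <oo) (r ^+ n)%:E < +oo)%E.
Proof.
case/andP => r0 r1.
have hr : `|r| < 1 by rewrite ger0_norm.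
rewrite (_ : (fun n => \sum_(0 <= i < n) (r ^+ i)%:E)%E =
             EFin \o series (geometric 1 r)); last first.
  apply/funext => n /=; rewrite sumEFin /series /=; congr (_%:E).
  by apply: eq_bigr => i _; rewrite /geometric /= mul1r.
by rewrite EFin_lim ?ltry //; exact: is_cvg_geometric_series.
Qed.

Lemma BC (A : nat -> set Omega) (r : R) : (forall n, measurable (A n)) ->
  0 <= r < 1 -> (forall n, Pr (A n) <= r ^+ n) ->
  {ae P, forall om, exists N, forall n, (N <= n)%N -> ~ A n om}.
Proof.
move=> mA hr hA; exists (lim_sup_set A); split.
- apply: bigcapT_measurable => n; apply: bigcup_measurable => j _; exact: mA.
- apply: lim_sup_set_cvg0 => //.
  apply: le_lt_trans (_ : _ <= \sum_(0 <= n <oo) (r ^+ n)%:E)%E (geom_fin hr).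
  apply: lee_nneseries; first by move=> n _ _; exact: measure_ge0.
  move=> n _; have := hA n; rewrite -lee_fin /Pr fineK; [exact | exact: fin_num_measure].
- move=> om /= H N _.
  have : ~ (forall n, (N <= n)%N -> ~ A n om) by move=> h; apply: H; exists N.
  move=> /existsNP [n /not_implyP [Nn /contrapT An]].
  by exists n.
Qed.

Definition epsj (j : nat) : R := (j.+1%:R)^-1.
Definition thj (j : nat) : R := epsj j / (16 * m%:R ^+ 2).

Lemma epsj_gt0 j : 0 < epsj j. Proof. by rewrite /epsj invr_gt0 ltr0n. Qed.
Lemma epsj_le1 j : epsj j <= 1.
Proof. by rewrite /epsj invf_le1 ?ltr0n // ler1n. Qed.

Lemma ae_Sj (hm : (1 <= m)%N) s0 j :
  {ae P, forall om, exists N, forall n, (N <= n)%N -> ~ Aev s0 (- (n%:R * epsj j)) n om}.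
Proof.
set e := epsj j; set th := thj j; set M : R := m%:R.
have e0 : 0 < e := epsj_gt0 j.
have e1 : e <= 1 := epsj_le1 j.
have M1 : 1 <= M by rewrite /M ler1n.
have M2 : 0 < 16 * M ^+ 2 by rewrite mulr_gt0 // exprn_gt0 //; lra.
have thE : th * (16 * M ^+ 2) = e by rewrite /th /thj divfK // gt_eqF.
have th0 : 0 < th by rewrite /th /thj divr_gt0.
have thm : 4 * th * M <= 1 by rewrite expr2 in thE; nra.
set rho := 1 + 8 * th ^+ 2 * M ^+ 2.
have rho_lt : rho < 1 + th * e by rewrite /rho -thE !expr2; nra.
have rho0 : 0 <= rho by rewrite /rho !expr2; nra.
apply: (@BC _ (expR (- (th * e)) * rho)).
- move=> n; exact: Aev_meas.
- apply/andP; split; first by apply: mulr_ge0 => //; exact: expR_ge0.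
  rewrite expRN mulrC ltr_pdivrMr ?expR_gt0 // mul1r.
  by apply: lt_le_trans rho_lt _; exact: expR_ge1Dx.
- move=> n; apply: le_trans (Pr_Aev _ _ _ (ltW th0) thm) _.
  rewrite [X in _ <= X]exprMn -expRM_natl (_ : th * - (n%:R * e) = n%:R * - (th * e)); last by ring.
  by [].
Qed.

Lemma ae_S (hm : (1 <= m)%N) :
  {ae P, forall om, forall s0 j, exists N, forall n, (N <= n)%N ->
      ~ Aev s0 (- (n%:R * epsj j)) n om}.
Proof.
have H1 : forall s0, {ae P, forall om, forall j, exists N, forall n, (N <= n)%N ->
      ~ Aev s0 (- (n%:R * epsj j)) n om}.
  by move=> s0; apply: ae_foralln => j; exact: ae_Sj.
have H2 : {ae P, forall om, forall i : nat, match (unpickle i : option (zvec k)) with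
    | Some s0 => forall j, exists N, forall n, (N <= n)%N -> ~ Aev s0 (- (n%:R * epsj j)) n om
    | None => True end}.
  apply: ae_foralln => i; case: (unpickle i) => [s0|]; first exact: H1.
  by apply: nearW.
apply: filterS H2 => om H s0; have := H (pickle s0); by rewrite pickleK.
Qed.

End Prob.

Section Omp.
Variables (k m : nat) (R : realType) (Pi : zvec k -> zvec k -> R).
Variable zs : nat -> zvec k.
Hypothesis good : forall i, (norm1 (zsub (zs i.+1) (zs i)) <= m)%N.
Local Notation W := {ffun 'I_k -> 'I_(2 * m + 1)}.

Definition inc i := zsub (zs i.+1) (zs i).
Definition ompath n : seq W := [seq enc m (inc i) | i <- iota 0 n].

Lemma ompath_S n : ompath n.+1 = rcons (ompath n) (enc m (inc n)).
Proof. by rewrite /ompath -[n.+1]addn1 iotaD map_cat cats1. Qed.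

Lemma zadd_zsub (u v : zvec k) : zadd v (zsub u v) = u.
Proof. by apply/ffunP => i; rewrite !ffunE addrC subrK. Qed.

Lemma pos_ompath n : pos (zs 0) (ompath n) = zs n.
Proof.
elim: n => [//|n IH]; rewrite ompath_S pos_rcons IH dec_enc; last exact: good.
exact: zadd_zsub.
Qed.

Lemma size_ompath n : size (ompath n) = n.
Proof. by rewrite size_map size_iota. Qed.

Lemma take_ompath i n : (i <= n)%N -> take i (ompath n) = ompath i.
Proof. by move=> hi; rewrite /ompath -map_take take_iota (minn_idPl hi). Qed.

Lemma ompath_in n : ompath n \in paths k m n.
Proof.
apply: mem_paths; first exact: size_ompath.
by apply/allP => f /mapP [i _ ->]; apply: Wok_enc; exact: good.
Qed.

Lemma Sf_ompath n : Sf Pi (zs 0) (ompath n) =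
  \sum_(0 <= i < n) ((alpha (inc i))%:~R - mu m Pi (zs i)).
Proof.
elim: n => [|n IH]; first by rewrite big_nil.
rewrite ompath_S Sf_rcons IH big_nat_recr //=; congr (_ + _).
by rewrite /Dst pos_ompath dec_enc //; exact: good.
Qed.

End Omp.

Lemma near_K (R : realType) (k : nat) (K : set 'rV[R]_k) (x : nat -> 'rV[R]_k) :
  (forall n, `|x n| <= 1) -> limit_points x `<=` K ->
  forall dl : R, 0 < dl -> exists N, forall n, (N <= n)%N -> exists2 y, K y & `|x n - y| < dl.
Proof.
move=> hx hL dl dl0; apply: contrapT => H.
have bad : forall N, exists n, (N <= n)%N /\ forall y, K y -> dl <= `|x n - y|.
  move=> N; apply: contrapT => h; apply: H; exists N => n Nn; apply: contrapT => h2.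
  apply: h; exists n; split => // y Ky; rewrite leNgt; apply/negP => lt; apply: h2.
  by exists y.
have [phi hphi] := choice bad.
set B := closed_ball (0 : 'rV[R]_k) 1.
have cB : compact B.
  apply: bounded_closed_compact; last exact: closed_ball_closed.
  exists 1; split; first exact: num_real.
  move=> M hM v; rewrite /B closed_ballE // /closed_ball_ /= sub0r normrN => hv.
  by apply: le_trans hv _; apply: ltW.
have FB : ((fun N => x (phi N)) @ \oo) B.
  exists 0%N => // N _ /=; rewrite /B closed_ballE // /closed_ball_ /= sub0r normrN; exact: hx.
have [y [By cly]] := cB _ _ FB.
have yL : limit_points x y.
  move=> e e0 N.
  have := cly [set v | exists n, (N <= n)%N /\ v = x n] (ball y e).
  case.
  - exists N => // N' /= hN'; exists (phi N'); split => //.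
    by apply: leq_trans hN' _; case: (hphi N').
  - exact: nbhsx_ballx.
  move=> v [[n [Nn ->]] hb]; exists n; split => //.
  by move: hb; rewrite -ball_normE /ball_ /= distrC.
have Ky := hL y yL.
have := cly [set v | exists N, v = x (phi N)] (ball y dl).
case.
- by exists 0%N => // N _ /=; exists N.
- exact: nbhsx_ballx.
move=> v [[N ->] hb]; have [_ hN] := hphi N; have := hN y Ky.
by move: hb; rewrite -ball_normE /ball_ /= distrC => h1 h2; move: (lt_le_trans h1 h2); rewrite ltxx.
Qed.

Section Det.
Variable R : realType.

Lemma sum_lb (b : nat -> R) (c : R) (N : nat) :
  (forall i, (N <= i)%N -> c <= b i) ->
  forall n, - \sum_(0 <= i < N) `|b i - c| <= \sum_(0 <= i < n) (b i - c).
Proof.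
move=> hb n.
have h1 : forall p, - \sum_(0 <= i < p) `|b i - c| <= \sum_(0 <= i < p) (b i - c).
  move=> p; rewrite -sumrN; apply: ler_sum => i _.
  by have := ler_norm (- (b i - c)); rewrite normrN; lra.
have hpos : forall p, 0 <= \sum_(0 <= i < p) `|b i - c| by move=> p; apply: sumr_ge0.
case: (leqP n N) => hn.
  apply: le_trans (h1 n).
  rewrite (@big_cat_nat _ _ _ n 0 N) //= opprD.
  have := hpos n; have : 0 <= \sum_(n <= i < N) `|b i - c| by apply: sumr_ge0.
  lra.
rewrite (@big_cat_nat _ _ _ N 0 n) //=; last exact: ltnW.
have : 0 <= \sum_(N <= i < n) (b i - c).
  rewrite big_nat_cond; apply: sumr_ge0 => i /andP[/andP[Ni _] _].
  by rewrite subr_ge0; apply: hb.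
have := h1 N; lra.
Qed.

Lemma final_det (zn b Sn : nat -> R) (z0 : R) (lam : \bar R) :
  (forall n, zn n = z0 + \sum_(0 <= i < n) b i + Sn n) ->
  (forall eps, 0 < eps -> exists N, forall n, (N <= n)%N -> - (n%:R * eps) < Sn n) ->
  (forall eta, 0 < eta -> exists N, forall i, (N <= i)%N -> (lam <= (b i + eta)%:E)%E) ->
  (lam <= limn_einf (fun n => (zn n / n%:R)%:E))%E.
Proof.
move=> hz hS hb.
case: lam hb => [lr| |] hb; last by rewrite leNye.
  2: by have [N hN] := hb 1 ltr01; have := hN N (leqnn N).
apply/lee_subgt0Pr => eta eta0.
have e4 : 0 < eta / 4 by rewrite divr_gt0.
have [N1 hN1] := hb _ e4.
have [N2 hN2] := hS _ e4.
set c := lr - eta / 4.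
have hbc : forall i, (N1 <= i)%N -> c <= b i.
  by move=> i hi; have := hN1 i hi; rewrite lee_fin /c; lra.
set C := \sum_(0 <= i < N1) `|b i - c|.
set A := z0 - C.
have e2 : 0 < eta / 2 by rewrite divr_gt0.
set N3 := Num.Def.archi_bound (`|A| / (eta / 2)).
have hN3 : `|A| / (eta / 2) < N3%:R by apply: archi_boundP; apply: divr_ge0 => //; exact: ltW.
rewrite limn_einf_lim; apply: lime_ge; first exact: is_cvg_einfs.
exists (maxn (maxn N2 N3) 1) => // n /= hn.
apply/ereal_infP => _ [p /= hp <-].
have hp2 : (N2 <= p)%N by lia.
have hp3 : (N3 <= p)%N by lia.
have hp1 : (0 < p)%N by lia.
have hpR : 0 < p%:R :> R by rewrite ltr0n.
rewrite lee_fin ler_pdivlMr //.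
have hsum := sum_lb hbc p.
rewrite sumrB sumr_const_nat subn0 -/C in hsum.
have hSp := hN2 p hp2.
have hA : `|A| <= p%:R * (eta / 2).
  have : N3%:R <= p%:R :> R by rewrite ler_nat.
  by move=> h; rewrite -ler_pdivrMr //; apply: ltW; apply: lt_le_trans hN3 h.
rewrite hz.
have : - `|A| <= A by have := ler_norm (- A); rewrite normrN; lra.
rewrite /A /c in hA hsum * => hA'.
rewrite -mulr_natl in hsum.
nra.
Qed.

End Det.

Section Vec.
Variables (R : realType) (k : nat).

Lemma intr_sum (F : 'I_k -> int) : (\sum_i F i)%:~R = \sum_i (F i)%:~R :> R.
Proof. by rewrite (big_morph (fun x : int => x%:~R : R) (@intrD R) (mulr0z 1)). Qed.

Lemma norm1R (s : zvec k) : nonneg_vec s -> (norm1 s)%:R = \sum_i (s i)%:~R :> R.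
Proof.
move=> hs; rewrite /norm1 natr_sum; apply: eq_bigr => i _.
by rewrite natr_absz ger0_norm.
Qed.

Lemma alphaR (s : zvec k) : (alpha s)%:~R = \sum_i (s i)%:~R :> R.
Proof. exact: intr_sum. Qed.

Lemma norm1_alpha (s : zvec k) : nonneg_vec s -> (norm1 s)%:R = (alpha s)%:~R :> R.
Proof. by move=> hs; rewrite norm1R // alphaR. Qed.

Lemma alpha_zadd (u v : zvec k) : alpha (zadd u v) = alpha u + alpha v.
Proof. by rewrite /alpha -big_split; apply: eq_bigr => i _; rewrite ffunE. Qed.

Lemma coord_le_norm1 (s : zvec k) i : nonneg_vec s -> (s i)%:~R <= (norm1 s)%:R :> R.
Proof.
move=> hs; rewrite norm1R // (bigD1 i) //= lerDl.
by apply: sumr_ge0 => j _; rewrite ler0z.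
Qed.

Lemma distr_simplex (s : zvec k) : nonneg_vec s -> norm1 s <> 0%N ->
  simplex R k (distr_vec R s).
Proof.
move=> hs hn; have hN : 0 < (norm1 s)%:R :> R by rewrite ltr0n lt0n; apply/eqP.
rewrite /distr_vec (negbTE (introN eqP hn)); split.
  by move=> i; rewrite mxE divr_ge0 // ler0z.
under eq_bigr do rewrite mxE.
by rewrite -mulr_suml -norm1R // divff // gt_eqF.
Qed.

Lemma entry_le_norm (v : 'rV[R]_k) i : `|v ord0 i| <= `|v|.
Proof.
rewrite [leRHS]/Num.norm /= mx_normrE.
exact: (le_bigmax _ (fun ij : 'I_1 * 'I_k => `|v ij.1 ij.2|) (ord0, i)).
Qed.

Lemma distr_norm_le1 (s : zvec k) : nonneg_vec s -> `|distr_vec R s| <= 1.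
Proof.
move=> hs; rewrite /distr_vec; case: eqP => hn; first by rewrite normr0.
have hN : 0 < (norm1 s)%:R :> R by rewrite ltr0n lt0n; apply/eqP.
rewrite [leLHS]/Num.norm /= mx_normrE; apply: bigmax_le => // -[a b] _ /=.
rewrite !mxE ger0_norm; last by apply: divr_ge0; [rewrite ler0z | exact: ltW].
by rewrite ler_pdivrMr // mul1r; exact: coord_le_norm1.
Qed.

Lemma dist1_le (x y : 'rV[R]_k) : dist1 x y <= k%:R * `|x - y|.
Proof.
rewrite /dist1; apply: le_trans (_ : _ <= \sum_(i < k) `|x - y|) _.
  by apply: ler_sum => i _; have := entry_le_norm (x - y) i; rewrite !mxE.
by rewrite sumr_const card_ord mulr_natl.
Qed.

End Vec.

Section G.
Variables (k m : nat) (R : realType) (Pi : zvec k -> zvec k -> R)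
  (p : zvec k -> 'rV[R]_k -> R) (a : R).
Local Notation W := {ffun 'I_k -> 'I_(2 * m + 1)}.

Definition gfun (x : 'rV[R]_k) : R := sum_w m (fun w => p w x * (alpha w)%:~R).
Definition CW : R := \sum_(f <- Wl k m) `|(alpha (wdecode f))%:~R : R|.

Lemma CW_ge0 : 0 <= CW. Proof. by apply: sumr_ge0. Qed.

Lemma sumw_Wl (F : zvec k -> R) : sum_w m F = \sum_(f <- Wl k m) F (wdecode f).
Proof. by rewrite /sum_w /Wl big_filter big_enum_cond. Qed.

Lemma Wl_ok (f : W) : f \in Wl k m -> (norm1 (wdecode f) <= m)%N.
Proof. by rewrite mem_filter => /andP[]. Qed.

Hypothesis hA2 : forall (s w : zvec k), nonneg_vec s -> norm1 s <> 0%N ->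
     (norm1 w <= m)%N ->
     `|p w (distr_vec R s) - Pi s (zadd s w)| <= a / (norm1 s)%:R.

Lemma g_mu (s : zvec k) : nonneg_vec s -> norm1 s <> 0%N ->
  gfun (distr_vec R s) <= mu m Pi s + a / (norm1 s)%:R * CW.
Proof.
move=> hs hn; rewrite /gfun sumw_Wl /mu -lerBlDl -sumrB /CW mulr_sumr.
rewrite big_seq_cond [X in _ <= X]big_seq_cond; apply: ler_sum => f /andP[hf _].
rewrite -mulrBl; apply: le_trans (ler_norm _) _; rewrite normrM.
apply: ler_wpM2r => //; exact: hA2 (Wl_ok hf).
Qed.

Hypothesis hpLip : forall w, (norm1 w <= m)%N -> exists L : R,
     forall x y, simplex R k x -> simplex R k y ->
       `|p w x - p w y| <= L * dist1 x y.

Lemma dist1_ge0 (x y : 'rV[R]_k) : 0 <= dist1 x y.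
Proof. by apply: sumr_ge0. Qed.

Lemma g_lip : exists2 L, 0 <= L & forall x y, simplex R k x -> simplex R k y ->
  gfun y <= gfun x + L * dist1 x y.
Proof.
have : forall w : zvec k, exists L : R, (norm1 w <= m)%N -> forall x y, simplex R k x -> simplex R k y ->
       `|p w x - p w y| <= L * dist1 x y.
  move=> w; case: (boolP (norm1 w <= m)%N) => hw.
    by have [L hL] := hpLip hw; exists L.
  by exists 0.
move=> /choice [Lf hLf].
exists (\sum_(f <- Wl k m) `|Lf (wdecode f)| * `|(alpha (wdecode f))%:~R : R|).
  by apply: sumr_ge0 => f _; apply: mulr_ge0.
move=> x y hx hy; rewrite /gfun !sumw_Wl -lerBlDl -sumrB mulr_suml.
rewrite big_seq_cond [X in _ <= X]big_seq_cond; apply: ler_sum => f /andP[hf _].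
rewrite -mulrBl; apply: le_trans (ler_norm _) _; rewrite normrM mulrAC.
apply: ler_wpM2r => //; rewrite distrC.
apply: le_trans (hLf _ (Wl_ok hf) x y hx hy) _.
by apply: ler_wpM2r; [exact: dist1_ge0 | exact: ler_norm].
Qed.

End G.

Lemma bigsetU_in (T : Type) (I : eqType) (l : seq I) (C : pred I) (F : I -> set T) i x :
  i \in l -> C i -> F i x -> (\big[setU/set0]_(j <- l | C j) F j) x.
Proof.
elim: l => [//|j l IH]; rewrite in_cons big_cons => /orP[/eqP <-|il] Ci Fx.
  by rewrite Ci; left.
by case: ifP => _; [right|]; apply: IH.
Qed.

Unset Implicit Arguments.

Theorem proposition1
  (k m : nat) (hk : (1 <= k)%N) (hm : (1 <= m)%N)
  (R : realType) (d : measure_display) (Omega : measurableType d)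
  (P : probability Omega R)
  (z : nat -> Omega -> zvec k)
  (Pi : zvec k -> zvec k -> R)
  (p : zvec k -> 'rV[R]_k -> R) (a : R)
  (K : set 'rV[R]_k)
  (* state space Z_+^k *)
  (hstate : forall n om, nonneg_vec (z n om))
  (hmeas : forall n s, measurable [set om | z n om = s])
  (* Pi is a transition kernel on Z_+^k *)
  (hPi0 : forall s s', 0 <= Pi s s')
  (hPi1 : forall s, nonneg_vec s ->
     (\esum_(s' in nonneg_vec (k:=k)) (Pi s s')%:E = 1)%E)
  (* (z_n) is a homogeneous Markov chain with kernel Pi *)
  (hmarkov : markov_chain P z Pi)
  (* (A1) *)
  (hA1 : {ae P, forall om, forall n, (norm1 (zsub (z n.+1 om) (z n om)) <= m)%N})
  (* (A2) *)
  (hp01 : forall w x, (norm1 w <= m)%N -> simplex R k x -> 0 <= p w x <= 1)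
  (hpLip : forall w, (norm1 w <= m)%N -> exists L : R,
     forall x y, simplex R k x -> simplex R k y ->
       `|p w x - p w y| <= L * dist1 x y)
  (ha : 0 < a)
  (hA2 : forall (s w : zvec k), nonneg_vec s -> norm1 s <> 0%N ->
     (norm1 w <= m)%N ->
     `|p w (distr_vec R s) - Pi s (zadd s w)| <= a / (norm1 s)%:R)
  (* K compact subset of S_k *)
  (hKsub : K `<=` simplex R k)
  (hK : compact K)
  (hlambda : (0 < ereal_inf
     [set (sum_w m (fun w => p w x * (alpha w)%:~R))%:E | x in K])%E) :
  {ae P, forall om,
     limit_points (fun n => distr_vec R (z n om)) `<=` K ->
     ((fun n => ((norm1 (z n om))%:R : R)) @ \oo --> +oo) ->
     (ereal_inf [set (sum_w m (fun w => p w x * (alpha w)%:~R))%:E | x in K]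
        <= limn_einf (fun n => ((norm1 (z n om))%:R / n%:R : R)%:E))%E}.
Proof.
have ae1 := ae_S hmeas hPi0 hmarkov hm.
move: hA1 ae1; apply: filterS2 => om hA hS hL hinf.
set zs := fun n => z n om.
have good : forall i, (norm1 (zsub (zs i.+1) (zs i)) <= m)%N := hA.
apply: (@final_det R (fun n => (norm1 (z n om))%:R) (fun i => mu m Pi (z i om))
   (fun n => Sf Pi (z 0%N om) (ompath m zs n)) (alpha (z 0%N om))%:~R).
- move=> n; rewrite (Sf_ompath Pi good) -addrA -big_split /=.
  under eq_bigr do rewrite addrC subrK.
  rewrite norm1_alpha; last exact: hstate.
  elim: n => [|n IH]; first by rewrite big_nil addr0.
  rewrite big_nat_recr //= addrA -IH.
  rewrite -[z n.+1 om](zadd_zsub (z n.+1 om) (z n om)).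
  by rewrite alpha_zadd intrD.
- move=> eps eps0.
  set j := Num.Def.archi_bound (eps^-1).
  have hj : epsj R j <= eps.
    have hb : eps^-1 < j%:R by apply: archi_boundP; rewrite invr_ge0 ltW.
    have he : eps * eps^-1 = 1 by rewrite mulfV // gt_eqF.
    have hj1 : j%:R <= j.+1%:R :> R by rewrite ler_nat.
    rewrite /epsj -div1r ler_pdivrMr ?ltr0n //; nra.
  have [N hN] := hS (z 0%N om) j.
  exists N => n hn.
  have H := hN n hn.
  have : ~ (Sf Pi (z 0%N om) (ompath m zs n) <= - (n%:R * epsj R j)).
    move=> hle; apply: H; rewrite /Aev.
    apply: (@bigsetU_in _ _ _ _ _ (ompath m zs n)); [exact: ompath_in | exact: hle | ].
    move=> i hi; rewrite size_ompath in hi; rewrite take_ompath // pos_ompath //.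
  move/negP; rewrite -ltNge => h.
  apply: le_lt_trans h; rewrite lerN2; apply: ler_wpM2l => //.
- move=> eta eta0.
  have [L L0 hLip] := g_lip hpLip.
  have hLk0 : 0 <= L * k%:R by apply: mulr_ge0.
  have hLk : 0 < 2 * (L * k%:R + 1) by lra.
  set dl := eta / (2 * (L * k%:R + 1)).
  have dl0 : 0 < dl by apply: divr_gt0.
  have hdl : dl * (2 * (L * k%:R + 1)) = eta by rewrite /dl divfK // gt_eqF.
  have [N1 hN1] := near_K (fun n => distr_norm_le1 R (hstate n om)) hL dl0.
  have CW0 := CW_ge0 k m R.
  set B := 2 * a * CW k m R / eta + 1.
  have hBe : (2 * a * CW k m R / eta) * eta = 2 * a * CW k m R by rewrite divfK // gt_eqF.
  have hB0 : 0 <= 2 * a * CW k m R / eta.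
    by apply: divr_ge0; [apply: mulr_ge0; [apply: mulr_ge0 => //; exact: ltW | exact: CW0] | exact: ltW].
  have [N2 _ hN2] := (cvgryPge _).1 hinf B.
  exists (maxn N1 N2) => i hi.
  have hi1 : (N1 <= i)%N by lia.
  have hi2 : (N2 <= i)%N by lia.
  have [y Ky hy] := hN1 i hi1.
  have hB : B <= (norm1 (z i om))%:R := hN2 i hi2.
  have hn0 : norm1 (z i om) <> 0%N.
    move=> h0; rewrite h0 /B in hB; lra.
  have hsx := distr_simplex R (hstate i om) hn0.
  have hy' := hKsub y Ky.
  have l1 : (ereal_inf [set (sum_w m (fun w => p w x * (alpha w)%:~R))%:E | x in K]
              <= (gfun m p y)%:E)%E.
    by apply: ereal_inf_lbound; exists y.
  have l2 := hLip _ _ hsx hy'.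
  have l3 := dist1_le (distr_vec R (z i om)) y.
  have l4 := g_mu hA2 (hstate i om) hn0.
  apply: le_trans l1 _; rewrite lee_fin.
  set N := (norm1 (z i om))%:R in hB l4.
  have hB1 : 1 <= B by rewrite /B; lra.
  have N0 : 0 < N by lra.
  have l5 : a / N * CW k m R <= eta / 2.
    rewrite mulrAC ler_pdivrMr //.
    have hX : 2 * a * CW k m R / eta <= N by move: hB; rewrite /B; lra.
    have e20 : 0 <= eta / 2 by apply: divr_ge0; [exact: ltW|].
    have := ler_wpM2l e20 hX; lra.
  set D := dist1 _ _ in l2 l3.
  have l6 : L * D <= eta / 2.
    have : `|distr_vec R (z i om) - y| <= dl by apply: ltW.
    move=> h; have hk0 : 0 <= k%:R :> R by [].
    have : D <= k%:R * dl by apply: le_trans l3 _; apply: ler_wpM2l.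
    move=> h2; have : L * D <= L * (k%:R * dl) by apply: ler_wpM2l.
    nra.
  lra.
Qed.
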